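(* For every $n\in\mathbb N$, the exponential vector space $\mathscr D^n[0,\infty)$ has a basis and $\dim\mathscr D^n[0,\infty)=[1:0]$.
   Context: An exponential vector space (evs) over a field $K$ is a partially ordered set $(X,\leq)$ with a binary operation $+$ on $X$ and a map $K\times X\to X$, $(\alpha,x)\mapsto \alpha x$, such that: (A1) $(X,+)$ is a commutative semigroup with identity $\theta$; (A2) $x\leq y$ implies $x+z\leq y+z$ and $\alpha x\leq \alpha y$ for all $z\in X$, $\alpha\in K$; (A3) $\alpha(x+y)=\alpha x+\alpha y$, $\alpha(\beta x)=(\alpha\beta)x$, $(\alpha+\beta)x\leq \alpha x+\beta x$, $1x=x$; (A4) $\alpha x=\theta$ iff $\alpha=0$ or $x=\theta$; (A5) $x+(-1)x=\theta$ iff $x\in X_0$, where $X_0:=\{z\in X: y\not\leq z \text{ for all } y\in X\smallsetminus\{z\}\}$ (the set of minimal elements, a vector space over $K$); (A6) for each $x\in X$ there is $p\in X_0$ with $p\leq x$. $\mathscr D^n[0,\infty)$ is the set $[0,\infty)^n$ over the field $\mathbb C$ with componentwise addition, scalar multiplication $\alpha\cdot(x_1,\dots,x_n)=(|\alpha|x_1,\dots,|\alpha|x_n)$, and the lexicographic (dictionary) order: $x\leq y$ iff $x=y$ or $x_i<y_i$ at the first index $i$ where $x_i\neq y_i$; its primitive space is $\{(0,\dots,0)\}$. For $x\in X\smallsetminus X_0$ let $L(x):=\{z\in X: z\geq \alpha x+p \text{ for some } \alpha\in K\smallsetminus\{0\},\ p\in X_0\}$. A subset $B\subseteq X\smallsetminus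 X_0$ generates $X\smallsetminus X_0$ if $X\smallsetminus X_0=\bigcup_{b\in B}L(b)$. Elements $x,y\in X\smallsetminus X_0$ are orderly dependent if $x\in L(y)$ or $y\in L(x)$, and orderly independent otherwise; $B$ is orderly independent if any two distinct members are orderly independent. A basis of $X\smallsetminus X_0$ is an orderly independent generating subset. All bases have the same cardinality $\dim(X\smallsetminus X_0)$; $\dim X_0$ is the vector-space dimension of $X_0$ ($0$ if $X_0=\{\theta\}$), and $\dim X:=[\dim(X\smallsetminus X_0):\dim X_0]$. *)

(* Defs.v *)
From Stdlib Require Import Reals Lra.
From Coquelicot Require Import Coquelicot.
Open Scope R_scope.

(** The data of an exponential vector space over the field C needed to state
    the notions of basis and dimension. *)
Record EVS := {
  car   : Type;
  le    : car -> car -> Prop;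
  add   : car -> car -> car;
  scal  : C -> car -> car;
  theta : car
}.

Section Notions.
Variable X : EVS.

Definition X0 (z : car X) : Prop :=
  forall y : car X, y <> z -> ~ le X y z.

Definition Lset (x : car X) (z : car X) : Prop :=
  exists (a : C) (p : car X), a <> 0%C /\ X0 p /\ le X (add X (scal X a x) p) z.

Definition generates (B : car X -> Prop) : Prop :=
  (forall b, B b -> ~ X0 b) /\
  (forall z, ~ X0 z <-> exists b, B b /\ Lset b z).

Definition orderly_dependent (x y : car X) : Prop := Lset y x \/ Lset x y.

Definition orderly_independent_set (B : car X -> Prop) : Prop :=
  forall x y, B x -> B y -> x <> y -> ~ orderly_dependent x y.

Definition is_basis (B : car X -> Prop) : Prop :=
  (forall b, B b -> ~ X0 b) /\ orderly_independent_set B /\ generates B.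
End Notions.

Definition Dvec (n : nat) : Type :=
  { x : nat -> R | (forall i, 0 <= x i) /\ (forall i, (n <= i)%nat -> x i = 0) }.

Lemma Dzero_prop (n : nat) :
  (forall i : nat, 0 <= (fun _ : nat => 0) i) /\
  (forall i, (n <= i)%nat -> (fun _ : nat => 0) i = 0).
Proof. split; intros; lra. Qed.

Definition Dzero (n : nat) : Dvec n := exist _ (fun _ => 0) (Dzero_prop n).

Lemma Dadd_prop (n : nat) (x y : Dvec n) :
  (forall i, 0 <= proj1_sig x i + proj1_sig y i) /\
  (forall i, (n <= i)%nat -> proj1_sig x i + proj1_sig y i = 0).
Proof.
  destruct x as [x [Hx1 Hx2]], y as [y [Hy1 Hy2]]; simpl; split; intros i.
  - specialize (Hx1 i); specialize (Hy1 i); lra.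
  - intros Hi; rewrite (Hx2 i Hi), (Hy2 i Hi); lra.
Qed.

Definition Dadd (n : nat) (x y : Dvec n) : Dvec n :=
  exist _ (fun i => proj1_sig x i + proj1_sig y i) (Dadd_prop n x y).

Lemma Dscal_prop (n : nat) (a : C) (x : Dvec n) :
  (forall i, 0 <= Cmod a * proj1_sig x i) /\
  (forall i, (n <= i)%nat -> Cmod a * proj1_sig x i = 0).
Proof.
  destruct x as [x [Hx1 Hx2]]; simpl; split; intros i.
  - apply Rmult_le_pos; [apply Cmod_ge_0 | apply Hx1].
  - intros Hi; rewrite (Hx2 i Hi); ring.
Qed.

Definition Dscal (n : nat) (a : C) (x : Dvec n) : Dvec n :=
  exist _ (fun i => Cmod a * proj1_sig x i) (Dscal_prop n a x).

Definition Dle (n : nat) (x y : Dvec n) : Prop :=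
  x = y \/
  exists i, (i < n)%nat /\
    (forall j, (j < i)%nat -> proj1_sig x j = proj1_sig y j) /\
    proj1_sig x i < proj1_sig y i.

Definition Dn (n : nat) : EVS :=
  {| car := Dvec n; le := @Dle n; add := @Dadd n; scal := @Dscal n; theta := Dzero n |}.

(* Main.v *)
Require Import Defs.
From Stdlib Require Import Reals.
From Coquelicot Require Import Coquelicot.
From Stdlib Require Import Lra Lia Classical FunctionalExtensionality ProofIrrelevance.
Open Scope R_scope.

Lemma Dzero_eq (n : nat) (z : Dvec n) :
  (forall i, proj1_sig z i = 0) -> z = Dzero n.
Proof.
  destruct z as [f H]; simpl; intros Hf; unfold Dzero.
  assert (f = fun _ => 0) by (apply functional_extensionality; exact Hf).
  subst f. f_equal. apply proof_irrelevance.
Qed.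

Definition lead (n : nat) (x : Dvec n) (i : nat) : Prop :=
  (i < n)%nat /\ (forall j, (j < i)%nat -> proj1_sig x j = 0) /\ 0 < proj1_sig x i.

Lemma lead_exists (n : nat) (z : Dvec n) : z <> Dzero n -> exists i, lead n z i.
Proof.
  intros Hz.
  assert (Hk : exists k, proj1_sig z k <> 0).
  { apply NNPP; intro C; apply Hz; apply Dzero_eq; intro i.
    apply NNPP; intro D; apply C; exists i; exact D. }
  destruct Hk as [k Hk].
  assert (Hmin : exists i, (forall j, (j < i)%nat -> proj1_sig z j = 0) /\ proj1_sig z i <> 0).
  { revert Hk. induction k as [k IH] using (well_founded_induction Wf_nat.lt_wf). intros Hk.
    destruct (classic (exists j, (j < k)%nat /\ proj1_sig z j <> 0)) as [[j [Hj1 Hj2]]|Hno].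
    - exact (IH j Hj1 Hj2).
    - exists k; split; [|exact Hk]. intros j Hj. apply NNPP; intro D; apply Hno; eauto. }
  destruct Hmin as [i [H1 H2]]. exists i.
  destruct z as [f [Hf1 Hf2]]; simpl in *.
  split; [|split; [exact H1|]].
  - destruct (Nat.lt_ge_cases i n) as [h|h]; [exact h|]. exfalso; apply H2; apply Hf2; exact h.
  - destruct (Rle_lt_or_eq_dec _ _ (Hf1 i)) as [h|h]; [exact h|]. exfalso; apply H2; symmetry; exact h.
Qed.

Lemma X0_iff (n : nat) (z : Dvec n) : X0 (Dn n) z <-> z = Dzero n.
Proof.
  split.
  - intros H. apply NNPP; intro Hz. destruct (lead_exists n z Hz) as [i [Hi1 [Hi2 Hi3]]].
    apply (H (Dzero n)); [intro E; apply Hz; symmetry; exact E|].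
    cbn. unfold Dle. right. exists i. split; [exact Hi1|]. split.
    + intros j Hj; simpl; rewrite Hi2; auto.
    + simpl; exact Hi3.
  - intros -> y Hy Hle. cbn in Hle. destruct Hle as [E|[i [_ [_ Hi]]]]; [exact (Hy E)|].
    exfalso. destruct y as [f [Hf1 Hf2]]; simpl in Hi. pose proof (Hf1 i); lra.
Qed.

Lemma dom (n : nat) (x y : Dvec n) (i : nat) :
  lead n x i -> (forall k, (k < i)%nat -> proj1_sig y k = 0) -> Lset (Dn n) y x.
Proof.
  intros [Hi1 [Hi2 Hi3]] Hy.
  assert (Hy0 : 0 <= proj1_sig y i) by (apply (proj1 (proj2_sig y))).
  set (c := proj1_sig x i / (proj1_sig y i + 1)).
  assert (Hc : 0 < c) by (unfold c; apply Rdiv_lt_0_compat; lra).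
  exists (RtoC c), (Dzero n). split; [|split].
  - intro E. apply (f_equal fst) in E. simpl in E. lra.
  - apply X0_iff; reflexivity.
  - cbn. right. exists i. split; [exact Hi1|]. split.
    + intros j Hj. simpl. rewrite Hy, Hi2 by exact Hj. ring.
    + simpl. rewrite Cmod_R, Rabs_pos_eq by lra.
      assert (c * proj1_sig y i < proj1_sig x i).
      { unfold c. apply (Rmult_lt_reg_r (proj1_sig y i + 1)); [lra|].
        field_simplify; lra. }
      lra.
Qed.

Lemma compare (n : nat) (x y : Dvec n) :
  x <> Dzero n -> y <> Dzero n -> Lset (Dn n) y x \/ Lset (Dn n) x y.
Proof.
  intros Hx Hy. destruct (lead_exists n x Hx) as [i Li]. destruct (lead_exists n y Hy) as [j Lj].
  destruct (Nat.le_gt_cases i j) as [h|h].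
  - left. apply (dom n x y i Li). intros k Hk. apply (proj1 (proj2 Lj)). lia.
  - right. apply (dom n y x j Lj). intros k Hk. apply (proj1 (proj2 Li)). lia.
Qed.

Lemma Lset_nz (n : nat) (x z : Dvec n) :
  x <> Dzero n -> Lset (Dn n) x z -> z <> Dzero n.
Proof.
  intros Hx [a [p [Ha [Hp Hle]]]] ->. apply X0_iff in Hp. subst p.
  cbn in Hle. destruct Hle as [E|[i [_ [_ Hi]]]].
  - apply Hx. apply Dzero_eq. intro i. apply (f_equal (fun w => proj1_sig w i)) in E.
    simpl in E. assert (0 < Cmod a) by (apply Cmod_gt_0; exact Ha). nra.
  - simpl in Hi. pose proof (proj1 (proj2_sig x) i) as Hf.
    assert (0 <= Cmod a) by apply Cmod_ge_0. nra.
Qed.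

Lemma evec_prop (n : nat) :
  (forall i, 0 <= (fun k => if andb (Nat.ltb k n) (Nat.eqb k (n - 1)) then 1 else 0) i) /\
  (forall i, (n <= i)%nat -> (fun k => if andb (Nat.ltb k n) (Nat.eqb k (n - 1)) then 1 else 0) i = 0).
Proof.
  split; intros i; simpl.
  - destruct (andb _ _); lra.
  - intros Hi. destruct (Nat.ltb_spec i n); [lia|reflexivity].
Qed.

Definition evec (n : nat) : Dvec n := exist _ _ (evec_prop n).

Close Scope R_scope.

Theorem mainTheorem13 (n : nat) (Hn : (1 <= n)%nat) :
  (exists B : car (Dn n) -> Prop, is_basis (Dn n) B) /\
  (forall B : car (Dn n) -> Prop, is_basis (Dn n) B ->
     exists b : car (Dn n), forall x, B x <-> x = b) /\
  (forall z : car (Dn n), X0 (Dn n) z <-> z = theta (Dn n)).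
Proof.
  assert (He1 : proj1_sig (evec n) (n - 1) = 1%R).
  { simpl. destruct (Nat.ltb_spec (n-1) n); [|lia]. rewrite Nat.eqb_refl. reflexivity. }
  assert (Hez : evec n <> Dzero n).
  { intro E. apply (f_equal (fun w => proj1_sig w (n-1))) in E. rewrite He1 in E. simpl in E. lra. }
  assert (HX : forall z : Dvec n, ~ X0 (Dn n) z <-> z <> Dzero n).
  { intro z. rewrite X0_iff. tauto. }
  split; [|split].
  - exists (fun x => x = evec n). split; [|split; [|split]].
    + intros b ->. apply HX. exact Hez.
    + intros x y -> -> E. exfalso; apply E; reflexivity.
    + intros b ->. apply HX. exact Hez.
    + intros z. rewrite HX. split.
      * intros Hz. exists (evec n). split; [reflexivity|].
        destruct (lead_exists n z Hz) as [i Li]. apply (dom n z (evec n) i Li).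
        intros k Hk. simpl. destruct (Nat.eqb_spec k (n-1)).
        -- destruct Li as [Hi _]. lia.
        -- rewrite Bool.andb_false_r. reflexivity.
      * intros [b [-> Hl]]. exact (Lset_nz n (evec n) z Hez Hl).
  - intros B [HB [Hind [_ Hgen]]].
    assert (Hne : ~ X0 (Dn n) (evec n)) by (apply HX; exact Hez).
    apply Hgen in Hne. destruct Hne as [b0 [Hb0 _]].
    exists b0. intros x. split.
    + intros Hx. apply NNPP. intros Hne. apply (Hind x b0 Hx Hb0 Hne).
      unfold orderly_dependent. apply compare; apply HX; apply HB; assumption.
    + intros ->; exact Hb0.
  - intro z. apply X0_iff.
Qed.
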